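(* Let $\Theta\subset\mathbb{R}^m$ be a nonempty polyhedral convex set, $g:\mathbb{R}^n\to\mathbb{R}^m$ be $\mathcal C^2$-smooth, $\Gamma:=\{x:g(x)\in\Theta\}$, and suppose MSCQ holds at $\bar x\in\Gamma$. Let $\bar v\in N_\Gamma(\bar x)$, and define $P(\bar x,\bar v):=\{y\in\mathbb{R}^m:\bar v=\nabla g(\bar x)^*y,\ y\in N_\Theta(g(\bar x))\}$ and, for $v\in K_\Gamma(\bar x,\bar v)$, $S(v):=\operatorname{argmax}\{\langle v,\nabla^2\langle y,g\rangle(\bar x)v\rangle: y\in P(\bar x,\bar v)\}$. Then $S(v)\neq\emptyset$ for every $v\in K_\Gamma(\bar x,\bar v)$.
   Context: MSCQ at $\bar x\in\Gamma$: there are a neighborhood $U$ of $\bar x$ and $\kappa>0$ with $\operatorname{dist}(x;\Gamma)\le\kappa\operatorname{dist}(g(x);\Theta)$ for all $x\in U$. $N_\Gamma$ is the limiting (Mordukhovich) normal cone; $N_\Theta$ the convex normal cone. Tangent cone $T_\Omega(\bar x):=\{w:\exists t_k\downarrow0,w_k\to w,\bar x+t_kw_k\in\Omega\}$; critical cone $K_\Omega(\bar x,\bar v):=T_\Omega(\bar x)\cap\{\bar v\}^\perp$. $\nabla^2\langle y,g\rangle(\bar x)$ is the Hessian of $x\mapsto\langle y,g(x)\rangle$ at $\bar x$. *)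

(* Defs.v *)
From HB Require Import structures.
From mathcomp Require Import all_boot all_order all_algebra.
From mathcomp Require Import all_classical all_reals all_analysis.
Set Implicit Arguments. Unset Strict Implicit. Unset Printing Implicit Defensive.
Import Order.TTheory GRing.Theory Num.Theory.
Import numFieldNormedType.Exports.
Local Open Scope classical_set_scope.
Local Open Scope ring_scope.

Section Defs.
Variable R : realType.

Definition dotv n (u v : 'rV[R]_n) : R := \sum_(i < n) u 0 i * v 0 i.
Definition enorm n (u : 'rV[R]_n) : R := Num.sqrt (dotv u u).

Definition ebasis n (i : 'I_n) : 'rV[R]_n := delta_mx 0 i.

Definition setdist n (x : 'rV[R]_n) (A : set 'rV[R]_n) : R :=
  inf [set enorm (x - a) | a in A].

Definition polyhedral m (Theta : set 'rV[R]_m) : Prop :=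
  exists (k : nat) (A : 'M[R]_(k, m)) (b : 'rV[R]_k),
    Theta = [set z | forall i : 'I_k, (z *m A^T) 0 i <= b 0 i].

Definition C2 n m (g : 'rV[R]_n -> 'rV[R]_m) : Prop :=
  (forall x, differentiable g x) /\
  (forall (j : 'I_n) x, differentiable (fun z => derive g z (ebasis j)) x) /\
  (forall (j k : 'I_n),
     continuous (fun x => derive (fun z => derive g z (ebasis j)) x (ebasis k))).

Definition MSCQ n m (g : 'rV[R]_n -> 'rV[R]_m) (Theta : set 'rV[R]_m)
  (xbar : 'rV[R]_n) : Prop :=
  exists kappa : R, 0 < kappa /\
    exists U, nbhs xbar U /\
      forall x, U x ->
        setdist x [set x' | Theta (g x')] <= kappa * setdist (g x) Theta.

Definition regular_normal n (Omega : set 'rV[R]_n) (x : 'rV[R]_n) : set 'rV[R]_n :=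
  [set v | forall eps : R, 0 < eps -> exists delta : R, 0 < delta /\
     forall x', Omega x' -> enorm (x' - x) < delta ->
       dotv v (x' - x) <= eps * enorm (x' - x)].

Definition limiting_normal n (Omega : set 'rV[R]_n) (xbar : 'rV[R]_n) : set 'rV[R]_n :=
  [set v | Omega xbar /\
     exists (xk vk : nat -> 'rV[R]_n),
       (forall k, Omega (xk k)) /\ xk @ \oo --> xbar /\
       vk @ \oo --> v /\ (forall k, regular_normal Omega (xk k) (vk k))].

Definition convex_normal m (Theta : set 'rV[R]_m) (z : 'rV[R]_m) : set 'rV[R]_m :=
  [set y | Theta z /\ forall z', Theta z' -> dotv y (z' - z) <= 0].

Definition tangent_cone n (Omega : set 'rV[R]_n) (xbar : 'rV[R]_n) : set 'rV[R]_n :=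
  [set w | exists (t : nat -> R) (wk : nat -> 'rV[R]_n),
     (forall k, 0 < t k) /\ t @ \oo --> 0 /\ wk @ \oo --> w /\
     (forall k, Omega (xbar + t k *: wk k))].

Definition critical_cone n (Omega : set 'rV[R]_n) (xbar vbar : 'rV[R]_n) : set 'rV[R]_n :=
  [set w | tangent_cone Omega xbar w /\ dotv w vbar = 0].

Definition jac_adj n m (g : 'rV[R]_n -> 'rV[R]_m) (xbar : 'rV[R]_n) (y : 'rV[R]_m)
  : 'rV[R]_n := \row_(j < n) dotv y (derive g xbar (ebasis j)).

Definition hess_quad n m (g : 'rV[R]_n -> 'rV[R]_m) (xbar : 'rV[R]_n)
  (y : 'rV[R]_m) (v : 'rV[R]_n) : R :=
  let phi := fun x : 'rV[R]_n => dotv y (g x) : R^o in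
  \sum_(j < n) \sum_(k < n)
     v 0 j * v 0 k * derive (fun z => derive phi z (ebasis j)) xbar (ebasis k).

Definition multipliers n m (g : 'rV[R]_n -> 'rV[R]_m) (Theta : set 'rV[R]_m)
  (xbar vbar : 'rV[R]_n) : set 'rV[R]_m :=
  [set y | vbar = jac_adj g xbar y /\ convex_normal Theta (g xbar) y].

Definition argmax_set n m (g : 'rV[R]_n -> 'rV[R]_m) (Theta : set 'rV[R]_m)
  (xbar vbar v : 'rV[R]_n) : set 'rV[R]_m :=
  [set y | multipliers g Theta xbar vbar y /\
     forall y', multipliers g Theta xbar vbar y' ->
       hess_quad g xbar y' v <= hess_quad g xbar y v].

End Defs.

(* Main.v *)
Require Import Defs.
From HB Require Import structures.
From mathcomp Require Import all_boot all_order all_algebra.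
From mathcomp Require Import all_classical all_reals all_analysis.
From mathcomp Require Import ring lra.
Import Order.TTheory GRing.Theory Num.Theory.
Import numFieldNormedType.Exports.
Local Open Scope classical_set_scope.
Local Open Scope ring_scope.
Set Implicit Arguments. Unset Strict Implicit. Unset Printing Implicit Defensive.

Section Alg.
Variable R : realType.
Implicit Types n p : nat.

Lemma dotvC n (u v : 'rV[R]_n) : dotv u v = dotv v u.
Proof. by rewrite /dotv; apply: eq_bigr => i _; rewrite mulrC. Qed.

Lemma dotvDl n (u w v : 'rV[R]_n) : dotv (u + w) v = dotv u v + dotv w v.
Proof. by rewrite /dotv -big_split; apply: eq_bigr => i _; rewrite mxE mulrDl. Qed.

Lemma dotvZl n a (u v : 'rV[R]_n) : dotv (a *: u) v = a * dotv u v.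
Proof. by rewrite /dotv mulr_sumr; apply: eq_bigr => i _; rewrite mxE mulrA. Qed.

Lemma dotv0l n (v : 'rV[R]_n) : dotv 0 v = 0.
Proof. by rewrite /dotv big1 // => i _; rewrite mxE mul0r. Qed.

Lemma dotvNl n (u v : 'rV[R]_n) : dotv (- u) v = - dotv u v.
Proof. by rewrite -scaleN1r dotvZl mulN1r. Qed.

Lemma dotvBl n (u w v : 'rV[R]_n) : dotv (u - w) v = dotv u v - dotv w v.
Proof. by rewrite dotvDl dotvNl. Qed.

Lemma dotvDr n (v u w : 'rV[R]_n) : dotv v (u + w) = dotv v u + dotv v w.
Proof. by rewrite dotvC dotvDl !(dotvC v). Qed.

Lemma dotvZr n a (v u : 'rV[R]_n) : dotv v (a *: u) = a * dotv v u.
Proof. by rewrite dotvC dotvZl dotvC. Qed.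

Lemma dotv0r n (v : 'rV[R]_n) : dotv v 0 = 0.
Proof. by rewrite dotvC dotv0l. Qed.

Lemma dotvNr n (v u : 'rV[R]_n) : dotv v (- u) = - dotv v u.
Proof. by rewrite dotvC dotvNl dotvC. Qed.

Lemma dotvBr n (v u w : 'rV[R]_n) : dotv v (u - w) = dotv v u - dotv v w.
Proof. by rewrite dotvDr dotvNr. Qed.

Lemma dotv_suml n p (F : 'I_p -> 'rV[R]_n) v :
  dotv (\sum_(i < p) F i) v = \sum_(i < p) dotv (F i) v.
Proof.
exact: (big_morph (fun u => dotv u v) (fun x y => dotvDl x y v) (dotv0l v)).
Qed.

Lemma dotv_sumr n p (F : 'I_p -> 'rV[R]_n) v :
  dotv v (\sum_(i < p) F i) = \sum_(i < p) dotv v (F i).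
Proof. by rewrite dotvC dotv_suml; apply: eq_bigr => i _; rewrite dotvC. Qed.

Lemma dotv_ge0 n (u : 'rV[R]_n) : 0 <= dotv u u.
Proof. by apply: sumr_ge0 => i _; rewrite -expr2 sqr_ge0. Qed.

Lemma dotv_gt0 n (u : 'rV[R]_n) : u != 0 -> 0 < dotv u u.
Proof.
move=> hu; rewrite lt_def dotv_ge0 andbT; apply/negP => /eqP H.
move/negP: hu; apply; apply/eqP/matrixP => i j; rewrite ord1 mxE.
have : u 0 j * u 0 j = 0.
  move: H; rewrite /dotv => H; apply: (psumr_eq0P _ H) => // k _.
  by rewrite -expr2 sqr_ge0.
by move/eqP; rewrite mulf_eq0 orbb => /eqP.
Qed.

Definition ext0 p (t : R) (mu : 'I_p -> R) : 'I_p.+1 -> R :=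
  fun i => if unlift ord0 i is Some j then mu j else t.

Lemma ext0_sum n p t mu (a : 'I_p.+1 -> 'rV[R]_n) :
  \sum_(i < p.+1) ext0 t mu i *: a i = t *: a ord0 + \sum_(j < p) mu j *: a (lift ord0 j).
Proof. by rewrite big_ord_recl /ext0 unlift_none; congr (_ + _); apply: eq_bigr => j _; rewrite liftK. Qed.

Lemma ext0_ge0 p t (mu : 'I_p -> R) : 0 <= t -> (forall j, 0 <= mu j) -> forall i, 0 <= ext0 t mu i.
Proof. by move=> ht hm i; rewrite /ext0; case: (unlift ord0 i). Qed.

Definition incone n p (a : 'I_p -> 'rV[R]_n) (v : 'rV[R]_n) :=
  exists mu : 'I_p -> R, (forall i, 0 <= mu i) /\ v = \sum_(i < p) mu i *: a i.

Lemma farkas n p (a : 'I_p -> 'rV[R]_n) (v : 'rV[R]_n) :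
  incone a v \/ (exists h, (forall i, dotv (a i) h <= 0) /\ 0 < dotv v h).
Proof.
elim: p a v => [|p IH] a v.
  have [->|v0] := eqVneq v 0.
    by left; exists (fun=> 0); split => // ; rewrite big_ord0.
  by right; exists v; split; [case|exact: dotv_gt0].
set w := a ord0; set a' := fun j => a (lift ord0 j).
case: (IH a' v) => [[mu [mu0 ->]]|[h [ha hv]]].
  left; exists (ext0 0 mu); split; first exact: ext0_ge0.
  by rewrite ext0_sum scale0r add0r.
have [wh|wh] := leP (dotv w h) 0.
  right; exists h; split => // i; case: (unliftP ord0 i) => [j ->|->] //; exact: ha.
set al := dotv w h.
have al0 : al != 0 by rewrite gt_eqF.
set phi := fun j => dotv (a' j) h / al.
have phi0 j : phi j <= 0 by rewrite /phi ler_pdivrMr // mul0r; exact: ha.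
case: (IH (fun j => a' j - phi j *: w) (v - (dotv v h / al) *: w)) =>
   [[mu [mu0 hmu]]|[h2 [ha2 hv2]]].
  left; exists (ext0 (dotv v h / al - \sum_j mu j * phi j) mu); split.
    apply: ext0_ge0 => //; rewrite subr_ge0; apply: (@le_trans _ _ 0).
      by apply: sumr_le0 => j _; rewrite mulr_ge0_le0.
    by rewrite divr_ge0 // ltW.
  rewrite ext0_sum; apply/eqP; rewrite -subr_eq0; apply/eqP.
  have hv' : v = \sum_(j < p) mu j *: (a' j - phi j *: w) + (dotv v h / al) *: w.
    by move/eqP: hmu; rewrite subr_eq => /eqP.
  rewrite {1}hv'.
  have -> : \sum_(j < p) mu j *: (a' j - phi j *: w) =
     \sum_(j < p) mu j *: a (lift ord0 j) - (\sum_j mu j * phi j) *: w.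
    rewrite scaler_suml -sumrB; apply: eq_bigr => j _.
    by rewrite scalerBr scalerA.
  rewrite scalerBl -/w.
  set T := \sum_(j < p) _; set P := _ *: w; set C := _ *: w.
  by apply/eqP; rewrite subr_eq0; apply/eqP; rewrite [LHS]addrC addrA [RHS]addrAC.
right; exists (h2 - (dotv w h2 / al) *: h); split.
  move=> i; case: (unliftP ord0 i) => [j ->|->].
    have := ha2 j; rewrite dotvBl dotvZl dotvBr dotvZr.
    suff -> : dotv w h2 / al * dotv (a' j) h = phi j * dotv w h2 by [].
    by rewrite /phi; ring.
  rewrite -/w dotvBr dotvZr -/al divfK // subrr lexx //.
move: hv2; rewrite dotvBl dotvZl dotvBr dotvZr.
suff -> : dotv w h2 / al * dotv v h = dotv v h / al * dotv w h2 by [].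
by ring.
Qed.

End Alg.

Section Small.
Variable R : realType.
Lemma small_all (I : finType) (P : I -> R -> Prop) :
  (forall i, exists d : R, 0 < d /\ forall e, 0 < e -> e <= d -> P i e) ->
  exists e : R, 0 < e /\ forall i, P i e.
Proof.
move=> H; have [D HD] := choice H.
exists (\big[Order.min/1]_i D i); split.
  by elim/big_ind: _ => // [x y hx hy|i _]; [rewrite lt_min hx hy|case: (HD i)].
move=> i; case: (HD i) => D0 HP; apply: HP; last exact: bigmin_le.
by elim/big_ind: _ => // [x y hx hy|j _]; [rewrite lt_min hx hy|case: (HD j)].
Qed.
End Small.

Section Poly.
Variable R : realType.
Variables (m k : nat) (A : 'M[R]_(k, m)) (b : 'rV[R]_k).
Definition thetaS := [set z : 'rV[R]_m | forall i : 'I_k, (z *m A^T) 0 i <= b 0 i].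

Lemma mulmxT_dot (z : 'rV[R]_m) i : (z *m A^T) 0 i = dotv z (row i A).
Proof. by rewrite !mxE /dotv; apply: eq_bigr => j _; rewrite !mxE. Qed.

Definition cgen (zb : 'rV[R]_m) (i : 'I_k) : 'rV[R]_m :=
  if dotv zb (row i A) == b 0 i then row i A else 0.

Lemma cone_normal zb y : thetaS zb -> incone (cgen zb) y -> convex_normal thetaS zb y.
Proof.
move=> hz [mu [mu0 ->]]; split => // z' hz'.
rewrite dotv_suml; apply: sumr_le0 => i _; rewrite dotvZl; apply: mulr_ge0_le0 => //.
rewrite /cgen; case: eqP => [e|_]; last by rewrite dotv0l.
by rewrite dotvBr !(dotvC (row i A)) e subr_le0 -mulmxT_dot; exact: hz'.
Qed.

Lemma normal_cone zb y : thetaS zb -> convex_normal thetaS zb y -> incone (cgen zb) y.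
Proof.
move=> hz [_ hy]; case: (farkas (cgen zb) y) => // [[h [hc hyh]]].
have [e [e0 he]] : exists e : R, 0 < e /\
    forall i, dotv (zb + e *: h) (row i A) <= b 0 i.
  apply: small_all => i.
  have := hc i; rewrite /cgen; case: eqP => [act|nact] hci.
    exists 1; split => // e e0 _; rewrite dotvDl dotvZl act gerDl.
    by rewrite dotvC; apply: mulr_ge0_le0 => //; rewrite ltW.
  have hzi := hz i; rewrite mulmxT_dot in hzi.
  set s := b 0 i - dotv zb (row i A).
  have s0 : 0 < s by rewrite /s subr_gt0 lt_neqAle hzi andbT; apply/eqP.
  set d := dotv h (row i A).
  have hq : 0 < `|d| + 1 by rewrite ltr_pwDr // normr_ge0.
  exists (s / (`|d| + 1)); split; first by rewrite divr_gt0.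
  move=> e e0 eq; rewrite dotvDl dotvZl -/d.
  set q := s / (`|d| + 1) in eq *.
  have qe : q * (`|d| + 1) = s by rewrite /q divfK // gt_eqF.
  have dd : d <= `|d| := ler_norm d.
  have d0 : 0 <= `|d| := normr_ge0 d.
  have : e * d <= s by nra.
  by rewrite /s; lra.
have hz' : thetaS (zb + e *: h) by move=> i; rewrite mulmxT_dot; exact: he.
have := hy _ hz'; have -> : zb + e *: h - zb = e *: h by rewrite addrC addKr.
by rewrite dotvZr leNgt mulr_gt0.
Qed.
End Poly.

Section LP.
Variable R : realType.
Variables (n p : nat) (B : 'I_p -> 'rV[R]_n) (t : 'rV[R]_n) (w : 'I_p -> R).

Definition feas (mu : 'I_p -> R) := (forall i, 0 <= mu i) /\ \sum_(i < p) mu i *: B i = t.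
Definition obj (mu : 'I_p -> R) := \sum_(i < p) mu i * w i.
Definition basic (mu : 'I_p -> R) := forall d : 'I_p -> R,
  (forall i, mu i = 0 -> d i = 0) -> \sum_(i < p) d i *: B i = 0 -> forall i, d i = 0.
Definition supp (mu : 'I_p -> R) : {set 'I_p} := [set i | mu i != 0].

Hypothesis noray : forall d : 'I_p -> R, (forall i, 0 <= d i) ->
  \sum_(i < p) d i *: B i = 0 -> obj d <= 0.

Lemma direction mu : ~ basic mu -> exists e : 'I_p -> R,
  (forall i, mu i = 0 -> e i = 0) /\ \sum_(i < p) e i *: B i = 0 /\ 0 <= obj e /\ exists i, e i < 0.
Proof.
move=> nb.
have [d [ds [dB [i0 di0]]]] : exists d : 'I_p -> R, (forall i, mu i = 0 -> d i = 0) /\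
    \sum_(i < p) d i *: B i = 0 /\ exists i, d i != 0.
  apply: contrapT => H; apply: nb => d ds dB i; apply/eqP; apply: contrapT => /negP di.
  by apply: H; exists d; split => //; split => //; exists i.
have objN : obj (fun i => - d i) = - obj d.
  by rewrite /obj -sumrN; apply: eq_bigr => i _; rewrite mulNr.
have sumN : \sum_(i < p) (- d i) *: B i = 0.
  by rewrite (eq_bigr (fun i => - (d i *: B i))) ?sumrN ?dB ?oppr0 // => i _; rewrite scaleNr.
have dsN : forall i, mu i = 0 -> - d i = 0 by move=> i /ds ->; rewrite oppr0.
have [od|od] := leP 0 (obj d).
  have [[i di]|nneg] := pselect (exists i, d i < 0).
    by exists d; split => //; split => //; split => //; exists i.
  have dge : forall i, 0 <= d i by move=> i; rewrite leNgt; apply/negP => hi; apply: nneg; exists i.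
  have := noray dge dB => od'.
  exists (fun i => - d i); split => //; split => //; split; first by rewrite objN; lra.
  exists i0; rewrite oppr_lt0 lt_neqAle dge andbT eq_sym //.
have [[i di]|npos] := pselect (exists i, 0 < d i).
  exists (fun i => - d i); split => //; split => //; split; first by rewrite objN; lra.
  by exists i; rewrite oppr_lt0.
have dge : forall i, 0 <= - d i.
  by move=> i; rewrite oppr_ge0 leNgt; apply/negP => hi; apply: npos; exists i.
have := noray dge sumN; rewrite objN; lra.
Qed.

Lemma reduce N : forall mu, (#|supp mu| <= N)%N -> feas mu ->
  exists mu', feas mu' /\ basic mu' /\ obj mu <= obj mu'.
Proof.
elim: N => [|N IH] mu hs hf.
  exists mu; split => //; split => // d ds dB i; apply: ds.
  have : i \notin supp mu by move: hs; rewrite leqn0 => /eqP/card0_eq ->.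
  by rewrite inE negbK => /eqP.
have [bm|nb] := pselect (basic mu); first by exists mu.
have [e [es [eB [oe [i1 ei1]]]]] := direction nb.
case: (@arg_minP _ _ _ i1 (fun i => e i < 0) (fun i => mu i / - e i) ei1) => i0 ei0 hmin.
set s := mu i0 / - e i0.
have mu0 : mu i0 != 0 by apply/eqP => /es h; move: ei0; rewrite h ltxx.
have hmu := hf.1.
have s0 : 0 <= s by rewrite /s divr_ge0 // oppr_ge0 ltW.
pose mu' := fun i => mu i + s * e i.
have hf' : feas mu'.
  split.
    move=> i; rewrite /mu'; have [ei|ei] := ltP (e i) 0.
      have := hmin i ei; rewrite -/s /= => hs'.
      have : s * - e i <= mu i by rewrite -ler_pdivlMr // oppr_gt0.
      lra.
    by apply: addr_ge0 => //; apply: mulr_ge0.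
  have -> : \sum_(i < p) mu' i *: B i = \sum_(i < p) mu i *: B i + s *: \sum_(i < p) e i *: B i.
    by rewrite scaler_sumr -big_split; apply: eq_bigr => i _; rewrite /mu' scalerDl scalerA.
  by rewrite eB scaler0 addr0 hf.2.
have hsub : supp mu' \proper supp mu.
  apply/properP; split.
    apply/fintype.subsetP => i; rewrite !inE /mu'; apply: contra => /eqP h.
    by rewrite h (es _ h) mulr0 addr0.
  exists i0; rewrite !inE // negbK /mu' /s; apply/eqP.
  by field; rewrite ?oppr_eq0 lt_eqF.
have hc : (#|supp mu'| <= N)%N.
  by rewrite -ltnS; exact: leq_trans (proper_card hsub) hs.
have [mu'' [f'' [b'' o'']]] := IH _ hc hf'.
exists mu''; split => //; split => //; apply: le_trans o''.
have -> : obj mu' = obj mu + s * obj e.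
  by rewrite /obj mulr_sumr -big_split; apply: eq_bigr => i _; rewrite /mu' mulrDl mulrA.
by rewrite lerDl; apply: mulr_ge0.
Qed.

Lemma basic_uniq mu mu' : feas mu -> feas mu' -> basic mu -> supp mu = supp mu' -> mu = mu'.
Proof.
move=> hf hf' hb hs; apply: funext => i; apply/eqP; rewrite -subr_eq0; apply/eqP.
apply: (hb (fun i => mu i - mu' i)) => [j hj|].
  have : j \notin supp mu' by rewrite -hs inE negbK hj.
  by rewrite inE negbK => /eqP ->; rewrite hj subrr.
under eq_bigr do rewrite scalerBl.
by rewrite sumrB hf.2 hf'.2 subrr.
Qed.

Theorem lp_max : (exists mu, feas mu) ->
  exists mu, feas mu /\ forall mu', feas mu' -> obj mu' <= obj mu.
Proof.
move=> [mu0 hf0].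
pose PS (S : {set 'I_p}) := `[< exists mu, feas mu /\ basic mu /\ supp mu = S >].
have [f hf] : {f : {set 'I_p} -> 'I_p -> R & forall S, PS S -> feas (f S) /\ basic (f S) /\ supp (f S) = S}.
  apply: (@choice _ _ (fun S mu => PS S -> feas mu /\ basic mu /\ supp mu = S)) => S.
  have [[mu h]|h] := pselect (exists mu, feas mu /\ basic mu /\ supp mu = S).
    by exists mu => _.
  by exists (fun=> 0) => /asboolP.
have [mu1 [f1 [b1 _]]] := reduce (leqnn _) hf0.
have P1 : PS (supp mu1) by apply/asboolP; exists mu1.
case: (@arg_maxP _ _ _ (supp mu1) PS (fun S => obj (f S)) P1) => Sm hPm hmax.
have [fm [bm _]] := hf _ hPm.
exists (f Sm); split => // mu' hf'.
have [mu2 [f2 [b2 o2]]] := reduce (leqnn _) hf'.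
have P2 : PS (supp mu2) by apply/asboolP; exists mu2.
have [ff [bf sf]] := hf _ P2.
have e2 : f (supp mu2) = mu2 by apply: basic_uniq.
apply: (le_trans o2); rewrite -e2; exact: hmax.
Qed.
End LP.

Section Norms.
Variable R : realType.
Implicit Types n : nat.

Definition n1 n (u : 'rV[R]_n) : R := \sum_(i < n) `|u 0 i|.

Lemma n1_ge0 n (u : 'rV[R]_n) : 0 <= n1 u.
Proof. by apply: sumr_ge0 => i _. Qed.

Lemma n1D n (u w : 'rV[R]_n) : n1 (u + w) <= n1 u + n1 w.
Proof. by rewrite /n1 -big_split; apply: ler_sum => i _; rewrite mxE ler_normD. Qed.

Lemma n1Z n a (u : 'rV[R]_n) : n1 (a *: u) = `|a| * n1 u.
Proof. by rewrite /n1 mulr_sumr; apply: eq_bigr => i _; rewrite mxE normrM. Qed.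

Lemma n1N n (u : 'rV[R]_n) : n1 (- u) = n1 u.
Proof. by rewrite /n1; apply: eq_bigr => i _; rewrite mxE normrN. Qed.

Lemma coord_le_norm n (u : 'rV[R]_n) i : `|u 0 i| <= `|u|.
Proof.
have /mapP[j Hj ->] : `|u 0 i| \in [seq `|u x.1 x.2| | x : 'I_1 * 'I_n].
  by apply/mapP; exists (0, i) => //=; rewrite mem_enum.
by rewrite (_ : `|u| = mx_norm u) // mx_normrE; apply/bigmax_geP; right => /=; exists j.
Qed.

Lemma norm_le_coord n (u : 'rV[R]_n) c : 0 <= c -> (forall i, `|u 0 i| <= c) -> `|u| <= c.
Proof.
move=> c0 H; rewrite (_ : `|u| = mx_norm u) // mx_normrE; apply/bigmax_leP; split => // [[i j]] _ /=.
by rewrite ord1; exact: H.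
Qed.

Lemma enorm_ge0 n (u : 'rV[R]_n) : 0 <= enorm u.
Proof. exact: sqrtr_ge0. Qed.

Lemma coord_le_enorm n (u : 'rV[R]_n) i : `|u 0 i| <= enorm u.
Proof.
rewrite /enorm -sqrtr_sqr ler_sqrt ?dotv_ge0 // /dotv (bigD1 i) //= -expr2 lerDl.
by apply: sumr_ge0 => j _; rewrite -expr2 sqr_ge0.
Qed.

Lemma enorm_le_n1 n (u : 'rV[R]_n) : enorm u <= n1 u.
Proof.
rewrite /enorm -(ger0_norm (n1_ge0 u)) -sqrtr_sqr ler_sqrt ?sqr_ge0 //.
rewrite expr2 /n1 /dotv mulr_suml; apply: ler_sum => i _.
apply: (le_trans (ler_norm _)); rewrite normrM; apply: ler_wpM2l => //.
rewrite (bigD1 i) //= lerDl.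
by apply: sumr_ge0.
Qed.

Lemma n1_le_enorm n (u : 'rV[R]_n) : n1 u <= n%:R * enorm u.
Proof.
by rewrite /n1 (le_trans (ler_sum _ (fun i _ => coord_le_enorm u i))) // sumr_const card_ord mulr_natl.
Qed.

Lemma n1_le_norm n (u : 'rV[R]_n) : n1 u <= n%:R * `|u|.
Proof.
by rewrite /n1 (le_trans (ler_sum _ (fun i _ => coord_le_norm u i))) // sumr_const card_ord mulr_natl.
Qed.

Lemma dotv_le n (u w : 'rV[R]_n) c : (forall i, `|w 0 i| <= c) -> `|dotv u w| <= n1 u * c.
Proof.
move=> H; rewrite /dotv /n1 mulr_suml; apply: le_trans (ler_norm_sum _ _ _) _.
apply: ler_sum => i _; rewrite normrM; apply: ler_wpM2l => //.
Qed.

Lemma dotv_le_enorm n (u w : 'rV[R]_n) : `|dotv u w| <= n1 u * enorm w.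
Proof. by apply: dotv_le => i; exact: coord_le_enorm. Qed.

Lemma dotv_le_norm n (u w : 'rV[R]_n) : `|dotv u w| <= n1 u * `|w|.
Proof. by apply: dotv_le => i; exact: coord_le_norm. Qed.

Lemma norm_le_enorm n (u : 'rV[R]_n) : `|u| <= enorm u.
Proof. by apply: norm_le_coord; [exact: enorm_ge0 | exact: coord_le_enorm]. Qed.

Lemma dotv_ebasis n (u : 'rV[R]_n) i : dotv (ebasis R i) u = u 0 i.
Proof.
rewrite /dotv (bigD1 i) //= big1 ?addr0 => [|j ji]; first by rewrite /ebasis mxE !eqxx mul1r.
by rewrite /ebasis mxE eqxx /= (negbTE ji) mul0r.
Qed.

Lemma cvg_bigsum (T : Type) (F : set_system T) {FF : Filter F} p (f : 'I_p -> T -> R) (l : 'I_p -> R) :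
  (forall i, f i x @[x --> F] --> l i) -> (\sum_(i < p) f i x) @[x --> F] --> \sum_(i < p) l i.
Proof.
elim: p f l => [|p IH] f l H.
  under eq_fun do rewrite big_ord0; rewrite big_ord0; exact: cvg_cst.
under eq_fun do rewrite big_ord_recr; rewrite big_ord_recr.
by apply: cvgD; [apply: (IH (fun i => f (widen_ord _ i)))|].
Qed.

Lemma dotv_cont n (y : 'rV[R]_n) : continuous (fun u : 'rV[R]_n => dotv y u).
Proof.
move=> u; rewrite /dotv.
apply: (@cvg_bigsum _ (nbhs u) _ n (fun i x => y 0 i * x 0 i)) => i; apply: cvgMl_tmp.
exact: coord_continuous.
Qed.

End Norms.

Section Deriv.
Variable R : realType.
Implicit Types n m : nat.

Lemma derive_dotv n m (f : 'rV[R]_n -> 'rV[R]_m) a v y : derivable f a v ->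
  derivable (fun x => dotv y (f x) : R^o) a v /\
  derive (fun x => dotv y (f x) : R^o) a v = dotv y (derive f a v).
Proof.
move=> df.
have E : (fun h : R => h^-1 *: (((fun x => dotv y (f x) : R^o) \o shift a) (h *: v) - dotv y (f a)))
   = (fun x => dotv y x) \o (fun h : R => h^-1 *: ((f \o shift a) (h *: v) - f a)).
  by apply: funext => h /=; rewrite dotvZr dotvBr.
have C : (fun h : R => h^-1 *: (((fun x => dotv y (f x) : R^o) \o shift a) (h *: v) - dotv y (f a)))
   @ 0^' --> dotv y (derive f a v).
  rewrite E; apply: continuous_cvg; first exact: dotv_cont.
  exact: df.
split; first exact: (cvgP _ C).
by rewrite /derive; apply: cvg_lim.
Qed.

Lemma derive_lin n (W : normedModType R) (f : 'rV[R]_n -> W) a v : differentiable f a ->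
  derive f a v = \sum_(j < n) v 0 j *: derive f a (ebasis R j).
Proof.
move=> df; rewrite deriveE //.
under eq_bigr do rewrite deriveE //.
by rewrite {1}(row_sum_delta v) linear_sum; apply: eq_bigr => j _; rewrite linearZ.
Qed.

Lemma line_derive n (phi : 'rV[R]_n -> R) a h s : derivable phi (a + s *: h) h ->
  derivable (fun t : R => phi (a + t *: h)) s 1 /\
  derive (fun t : R => phi (a + t *: h)) s 1 = derive phi (a + s *: h) h.
Proof.
move=> dp.
have E : (fun t : R => t^-1 *: (((fun t : R => phi (a + t *: h)) \o shift s) (t *: 1) - phi (a + s *: h)))
  = (fun t : R => t^-1 *: ((phi \o shift (a + s *: h)) (t *: h) - phi (a + s *: h))).
  apply: funext => t /=; congr (_ *: (phi _ - _)).
  by rewrite [t *: 1]mulr1 scalerDl addrCA addrC.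
by rewrite /derivable /derive E; split.
Qed.

Lemma line_is_derive n (phi : 'rV[R]_n -> R) a h s : derivable phi (a + s *: h) h ->
  is_derive s 1 (fun t : R => phi (a + t *: h)) (derive phi (a + s *: h) h).
Proof. by move=> dp; have [d1 d2] := line_derive dp; split. Qed.

Lemma line_MVT n (phi : 'rV[R]_n -> R) a h t : (forall x, derivable phi x h) -> 0 <= t ->
  exists2 c, 0 <= c <= t & phi (a + t *: h) - phi a = derive phi (a + c *: h) h * t.
Proof.
move=> dphi t0.
have := @MVT_segment R (fun s => phi (a + s *: h)) (fun s => derive phi (a + s *: h) h) 0 t t0.
case.
- move=> x _; exact: line_is_derive.
- apply: derivable_within_continuous => x _.
  by have [] := line_derive (dphi (a + x *: h)).
- move=> c; rewrite in_itv /= => hc; rewrite scale0r addr0 subr0 => ->.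
  by exists c.
Qed.

Lemma line_MVT_strict n (phi : 'rV[R]_n -> R) a h t : (forall x, derivable phi x h) -> 0 < t ->
  exists2 c, 0 < c < t & phi (a + t *: h) - phi a = derive phi (a + c *: h) h * t.
Proof.
move=> dphi t0.
have := @MVT R (fun s => phi (a + s *: h)) (fun s => derive phi (a + s *: h) h) 0 t t0.
case.
- move=> x _; exact: line_is_derive.
- apply: derivable_within_continuous => x _.
  by have [] := line_derive (dphi (a + x *: h)).
- move=> c; rewrite in_itv /= => hc; rewrite scale0r addr0 subr0 => ->.
  by exists c.
Qed.

End Deriv.

Section G.
Variable R : realType.
Variables (n m : nat) (g : 'rV[R]_n -> 'rV[R]_m).
Hypothesis hg : forall x, differentiable g x.
Hypothesis hgj : forall (j : 'I_n) x, differentiable (fun z => derive g z (ebasis R j)) x.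
Hypothesis hgc : forall (j k : 'I_n),
  continuous (fun x => derive (fun z => derive g z (ebasis R j)) x (ebasis R k)).

Definition gj (j : 'I_n) := fun z => derive g z (ebasis R j).
Definition H2 (j k : 'I_n) := fun x => derive (gj j) x (ebasis R k).

Lemma g_derivable x v : derivable g x v.
Proof. exact: (@diff_derivable _ _ _ g x v (hg x)). Qed.

Lemma gj_derivable j x v : derivable (gj j) x v.
Proof. exact: (@diff_derivable _ _ _ (gj j) x v (hgj j x)). Qed.

Lemma phi_derivable y x v : derivable (fun x => dotv y (g x) : R^o) x v.
Proof. by have [] := derive_dotv y (@g_derivable x v). Qed.

Lemma phi_deriveE y x v : derive (fun x => dotv y (g x) : R^o) x v = dotv y (derive g x v).
Proof. by have [] := derive_dotv y (@g_derivable x v). Qed.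

Lemma psi_derivable y j x v : derivable (fun z => dotv y (gj j z) : R^o) x v.
Proof. by have [] := derive_dotv y (@gj_derivable j x v). Qed.

Lemma psi_deriveE y j x v : derive (fun z => dotv y (gj j z) : R^o) x v = dotv y (derive (gj j) x v).
Proof. by have [] := derive_dotv y (@gj_derivable j x v). Qed.

Lemma hessE y v xbar : hess_quad g xbar y v =
  \sum_(j < n) \sum_(k < n) v 0 j * v 0 k * dotv y (H2 j k xbar).
Proof.
rewrite /hess_quad /=; apply: eq_bigr => j _; apply: eq_bigr => k _.
have -> : (fun z => derive (fun x => dotv y (g x) : R^o) z (ebasis R j)) = (fun z => dotv y (gj j z)).
  by apply: funext => z; rewrite phi_deriveE.
by rewrite psi_deriveE.
Qed.

Lemma jac_dot y h xbar : dotv (jac_adj g xbar y) h = dotv y (derive g xbar h).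
Proof.
rewrite (@derive_lin _ _ _ g xbar h (hg xbar)) dotv_sumr {1}/dotv; apply: eq_bigr => j _.
by rewrite mxE dotvZr mulrC.
Qed.

Lemma jac_lin p (mu : 'I_p -> R) (c : 'I_p -> 'rV[R]_m) xbar :
  jac_adj g xbar (\sum_(i < p) mu i *: c i) = \sum_(i < p) mu i *: jac_adj g xbar (c i).
Proof.
apply/rowP => j; rewrite !mxE summxE dotv_suml; apply: eq_bigr => i _.
by rewrite dotvZl !mxE.
Qed.

Lemma derive_g_lin xbar w : derive g xbar w = \sum_(j < n) w 0 j *: gj j xbar.
Proof. exact: (@derive_lin _ _ _ g xbar w (hg xbar)). Qed.

Lemma derive_gj_lin j xbar w : derive (gj j) xbar w = \sum_(k < n) w 0 k *: H2 j k xbar.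
Proof. exact: (@derive_lin _ _ _ (gj j) xbar w (hgj j xbar)). Qed.

Lemma recession (Theta : set 'rV[R]_m) xbar (lam : 'rV[R]_m) (v : 'rV[R]_n) :
  (forall z', Theta z' -> dotv lam (z' - g xbar) <= 0) ->
  (forall j, dotv lam (gj j xbar) = 0) ->
  tangent_cone [set x | Theta (g x)] xbar v ->
  \sum_(j < n) \sum_(k < n) v 0 j * v 0 k * dotv lam (H2 j k xbar) <= 0.
Proof.
move=> hN hJ [t [w [t0 [tc [wc hin]]]]].
pose c j k p := dotv lam (H2 j k p).
pose S (N : nat) (eta : 'I_n -> R) :=
  \sum_(j < n) \sum_(k < n) w N 0 j * w N 0 k * c j k (xbar + eta j *: w N).
have key : forall N, exists eta : 'I_n -> R, (forall j, 0 <= eta j <= t N) /\ S N eta <= 0.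
  move=> N.
  have [xi /andP[xi0 xit] E1] := line_MVT_strict xbar
     (fun x => @phi_derivable lam x (w N)) (t0 N).
  have hpsi : forall j, exists e, (0 <= e <= xi) /\
      dotv lam (gj j (xbar + xi *: w N)) - dotv lam (gj j xbar) =
      derive (fun z => dotv lam (gj j z) : R^o) (xbar + e *: w N) (w N) * xi.
    move=> j; have [e he E] := line_MVT xbar (fun x => @psi_derivable lam j x (w N)) (ltW xi0).
    by exists e; split.
  have [eta heta] := choice hpsi.
  exists eta; split.
    by move=> j; have [/andP[a1 a2] _] := heta j; rewrite a1 /= (le_trans a2) // ltW.
  have L : dotv lam (g (xbar + t N *: w N)) - dotv lam (g xbar) <= 0.
    by rewrite -dotvBr; apply: hN; exact: hin.
  have E2 : derive (fun x => dotv lam (g x) : R^o) (xbar + xi *: w N) (w N) = xi * S N eta.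
    rewrite phi_deriveE derive_g_lin dotv_sumr /S mulr_sumr; apply: eq_bigr => j _.
    have [_ Ej] := heta j; move: Ej; rewrite hJ subr0 psi_deriveE derive_gj_lin => Ej.
    rewrite dotvZr Ej dotv_sumr mulr_suml !mulr_sumr; apply: eq_bigr => k _.
    by rewrite dotvZr /c; ring.
  move: L; rewrite E1 E2 => L.
  have : 0 < xi * t N by rewrite mulr_gt0.
  move: L; rewrite mulrAC; set q := xi * t N => L q0.
  by move: L; rewrite pmulr_rle0.
have [etaf hetaf] := choice key.
have eta0 : forall j, (fun N => etaf N j) @ \oo --> 0.
  move=> j; apply: (@squeeze_cvgr _ _ _ _ (fun=> 0) t).
  - by apply: filterE => N; have [h _] := hetaf N; exact: h.
  - exact: cvg_cst.
  - exact: tc.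
have pc : forall j, (fun N => xbar + etaf N j *: w N) @ \oo --> xbar.
  move=> j; rewrite -[X in _ --> X]addr0.
  apply: (@cvgD _ _ _ _ _ (fun=> xbar) (fun N => etaf N j *: w N)); first exact: cvg_cst.
  by rewrite -(scale0r v); apply: cvgZ => //; exact: eta0.
have cc : forall j k, (fun N => c j k (xbar + etaf N j *: w N)) @ \oo --> c j k xbar.
  move=> j k.
  apply: (@continuous_cvg _ _ _ _ _ (fun N => H2 j k (xbar + etaf N j *: w N)) (fun u => dotv lam u)).
    exact: dotv_cont.
  apply: (@continuous_cvg _ _ _ _ _ (fun N => xbar + etaf N j *: w N) (H2 j k)).
    exact: hgc.
  exact: pc.
have wc' : forall j, (fun N => w N 0 j) @ \oo --> v 0 j.
  move=> j; apply: (@continuous_cvg _ _ _ _ _ w (fun u : 'rV[R]_n => u 0 j)) => //.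
  exact: coord_continuous.
have SC : (fun N => S N (etaf N)) @ \oo --> \sum_(j < n) \sum_(k < n) v 0 j * v 0 k * c j k xbar.
  apply: cvg_bigsum => j; apply: cvg_bigsum => k.
  apply: (@cvgM _ _ _ _ (fun N => w N 0 j * w N 0 k) (fun N => c j k (xbar + etaf N j *: w N))).
    apply: (@cvgM _ _ _ _ (fun N => w N 0 j) (fun N => w N 0 k)); exact: wc'.
  exact: cc.
have L : lim ((fun N => S N (etaf N)) @ \oo) <= 0.
  apply: limr_le; first exact: (cvgP _ SC).
  by apply: filterE => N; exact: (hetaf N).2.
by rewrite (cvg_lim _ SC) in L.
Qed.

End G.

Section Helpers.
Variable R : realType.

Lemma cont_eps (V W : normedModType R) (f : V -> W) x : {for x, continuous f} ->
  forall e, 0 < e -> exists2 d, 0 < d & forall y, `|x - y| < d -> `|f x - f y| < e.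
Proof.
move=> fc e e0; move/cvgrPdist_lt: fc => /(_ e e0) H.
move/nbhs_normP: H => [d d0 hd].
by exists d => // y hy; exact: (hd y hy).
Qed.

Lemma seq_eps (V : normedModType R) (u : nat -> V) l : u @ \oo --> l ->
  forall e, 0 < e -> \forall N \near \oo, `|l - u N| < e.
Proof. by move=> uc e e0; move/cvgrPdist_lt: uc => /(_ e e0). Qed.

Lemma small2 (P Q : R -> Prop) :
  (exists2 d, 0 < d & forall e, 0 < e -> e <= d -> P e) ->
  (exists2 d, 0 < d & forall e, 0 < e -> e <= d -> Q e) ->
  exists2 d, 0 < d & forall e, 0 < e -> e <= d -> P e /\ Q e.
Proof.
move=> [d1 d10 h1] [d2 d20 h2]; exists (Order.min d1 d2); first by rewrite lt_min d10 d20.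
move=> e e0 ed; rewrite le_min in ed; case/andP: ed => e1 e2; split; [exact: h1|exact: h2].
Qed.

Lemma setdist_le n (z w : 'rV[R]_n) (A : set 'rV[R]_n) : A w -> setdist z A <= enorm (z - w).
Proof.
move=> Aw; rewrite /setdist; apply: ge_inf; last by exists w.
by exists 0 => _ [a _ <-]; exact: enorm_ge0.
Qed.

Lemma setdist_lt n (z : 'rV[R]_n) (A : set 'rV[R]_n) r : A !=set0 -> setdist z A < r ->
  exists2 a, A a & enorm (z - a) < r.
Proof.
move=> [a0 Aa0] hr; have := @inf_lt _ [set enorm (z - a) | a in A] r.
case; [by exists (enorm (z - a0)), a0 | exact: hr | ].
by move=> _ [a Aa <-] ha; exists a.
Qed.

Lemma phi_est n (phi : 'rV[R]_n -> R) xb h : (forall x, derivable phi x h) ->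
  {for xb, continuous (fun p => derive phi p h)} ->
  forall eps, 0 < eps -> exists2 d, 0 < d & forall x t, `|xb - x| < d -> 0 <= t -> t < d ->
    `|phi (x + t *: h) - phi x - t * derive phi xb h| <= eps * t.
Proof.
move=> dphi cphi eps e0; have [d0 d00 hd0] := cont_eps cphi e0.
have hq : 0 < 2 * (`|h| + 1) by rewrite mulr_gt0 // ltr_pwDr.
set q := d0 / (2 * (`|h| + 1)).
have q0 : 0 < q by rewrite divr_gt0.
have qe : q * (2 * (`|h| + 1)) = d0 by rewrite /q divfK // gt_eqF.
exists q => // x t hx t0 ht.
have [c /andP[c0 ct] E] := line_MVT x dphi t0.
rewrite E (mulrC t) -mulrBl normrM (ger0_norm t0); apply: ler_wpM2r => //.
rewrite distrC; apply: ltW; apply: hd0.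
rewrite opprD addrA; apply: (le_lt_trans (ler_normB _ _)).
rewrite normrZ (ger0_norm c0).
have nh := normr_ge0 h.
have : c * `|h| <= q * `|h| by apply: ler_wpM2r => //; apply: ltW; apply: (le_lt_trans ct).
nra.
Qed.

End Helpers.

Section G2.
Variable R : realType.
Variables (n m : nat) (g : 'rV[R]_n -> 'rV[R]_m).
Hypothesis hg : forall x, differentiable g x.
Hypothesis hgj : forall (j : 'I_n) x, differentiable (fun z => derive g z (ebasis R j)) x.

Lemma phiD y x v : derivable (fun x => dotv y (g x) : R^o) x v.
Proof. exact: (phi_derivable hg). Qed.

Lemma phi_dcont y xb h :
  {for xb, continuous (fun p => derive (fun x => dotv y (g x) : R^o) p h)}.
Proof.
have E : (fun p => derive (fun x => dotv y (g x) : R^o) p h) =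
         (fun p => \sum_(j < n) h 0 j * dotv y (gj g j p)).
  apply: funext => p; rewrite (phi_deriveE hg) (derive_g_lin hg) dotv_sumr.
  by apply: eq_bigr => j _; rewrite dotvZr.
rewrite E; apply: (@cvg_bigsum _ _ (nbhs xb) _ n (fun j p => h 0 j * dotv y (gj g j p))) => j.
apply: cvgMl_tmp.
apply: (@continuous_cvg _ _ _ _ _ (gj g j) (fun u => dotv y u)); first exact: dotv_cont.
exact: (differentiable_continuous (hgj j xb)).
Qed.

Lemma g_est xb h eps : 0 < eps -> exists2 d, 0 < d & forall x t, `|xb - x| < d -> 0 <= t -> t < d ->
  enorm (g (x + t *: h) - g x - t *: derive g xb h) <= eps * t.
Proof.
move=> e0; set e' := eps / (m%:R + 1).
have m0 : 0 < m%:R + 1 :> R by rewrite ltr_pwDr.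
have e'0 : 0 < e' by rewrite divr_gt0.
have [d [d0 hd]] : exists d : R, 0 < d /\ forall i : 'I_m, forall x t, `|xb - x| < d -> 0 <= t -> t < d ->
    `|g (x + t *: h) 0 i - g x 0 i - t * derive g xb h 0 i| <= e' * t.
  apply: small_all => i.
  have [d d0 hd] := phi_est (fun x => @phiD (ebasis R i) x h)
     (@phi_dcont (ebasis R i) xb h) e'0.
  exists d; split => // e ee0 ed x t hx t0 ht.
  have := hd x t (lt_le_trans hx ed) t0 (lt_le_trans ht ed).
  by rewrite (phi_deriveE hg) !dotv_ebasis.
exists d => // x t hx t0 ht.
apply: (le_trans (enorm_le_n1 _)); rewrite /n1.
have B : forall i, `|(g (x + t *: h) - g x - t *: derive g xb h) 0 i| <= e' * t.
  by move=> i; rewrite !mxE; exact: hd.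
apply: (le_trans (ler_sum _ (fun i _ => B i))).
rewrite sumr_const card_ord -mulr_natl mulrA; apply: ler_wpM2r => //.
rewrite /e' mulrA ler_pdivrMr //; lra.
Qed.


Lemma ne_mult k (A : 'M[R]_(k, m)) (b : 'rV[R]_k) xbar vbar :
  thetaS A b (g xbar) ->
  MSCQ g (thetaS A b) xbar ->
  limiting_normal [set x | thetaS A b (g x)] xbar vbar ->
  incone (fun i => jac_adj g xbar (cgen A b (g xbar) i)) vbar.
Proof.
move=> hzb [kap [kap0 [U [hU hmscq]]]] [_ [xk [vk [hxk [xkc [vkc hreg]]]]]].
case: (farkas (fun i => jac_adj g xbar (cgen A b (g xbar) i)) vbar) => // [[h [hc hvh]]].
exfalso.
set Th := thetaS A b.
set zb := g xbar. set d := derive g xbar h.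
have hcd : forall i, dotv (cgen A b zb i) d <= 0 by move=> i; rewrite -(jac_dot hg); exact: hc i.
set gam := dotv vbar h.
have [ra ra0 hra] : exists2 r : R, 0 < r & forall x t, Th (g x) -> `|xbar - x| < r -> 0 <= t -> t <= r ->
    Th (g x + t *: d).
  have [e [e0 he]] : exists e : R, 0 < e /\ forall i : 'I_k, forall x t, Th (g x) -> `|xbar - x| < e ->
      0 <= t -> t <= e -> dotv (g x + t *: d) (row i A) <= b 0 i.
    apply: small_all => i.
    have hzi := hzb i; rewrite mulmxT_dot in hzi.
    have hci := hcd i; rewrite /cgen in hci.
    move: hci; case: eqP => [act|nact] hci.
      exists 1; split => // e e0 _ x t hx _ t0 _.
      have hxi := hx i; rewrite mulmxT_dot in hxi.
      rewrite dotvDl dotvZl.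
      have : t * dotv d (row i A) <= 0 by rewrite dotvC; apply: mulr_ge0_le0.
      lra.
    set s := b 0 i - dotv zb (row i A).
    have s0 : 0 < s by rewrite /s subr_gt0 lt_neqAle hzi andbT; apply/eqP.
    set nr := n1 (row i A).
    have nr0 : 0 <= nr := n1_ge0 _.
    have hq1 : 0 < 2 * (nr + 1) by rewrite mulr_gt0 // ltr_pwDr.
    set q1 := s / (2 * (nr + 1)).
    have q10 : 0 < q1 by rewrite divr_gt0.
    have q1e : q1 * (2 * (nr + 1)) = s by rewrite /q1 divfK // gt_eqF.
    have [d1 d10 hd1] := cont_eps (differentiable_continuous (hg xbar)) q10.
    set dd := dotv d (row i A).
    have dd0 : 0 <= `|dd| := normr_ge0 dd.
    have hq2 : 0 < 2 * (`|dd| + 1) by rewrite mulr_gt0 // ltr_pwDr.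
    set q2 := s / (2 * (`|dd| + 1)).
    have q20 : 0 < q2 by rewrite divr_gt0.
    have q2e : q2 * (2 * (`|dd| + 1)) = s by rewrite /q2 divfK // gt_eqF.
    exists (Order.min d1 q2); split; first by rewrite lt_min d10 q20.
    move=> e e0 ee x t hx hxe t0 te.
    move: ee; rewrite le_min => /andP[e1 e2].
    have hgx : `|zb - g x| < q1 by apply: hd1; exact: (lt_le_trans hxe e1).
    have hdot : `|dotv (row i A) (zb - g x)| <= nr * `|zb - g x| := dotv_le_norm _ _.
    have hdot' : - dotv (row i A) (zb - g x) <= nr * `|zb - g x|.
      by apply: le_trans hdot; rewrite -normrN ler_norm.
    have E : dotv (g x) (row i A) = dotv zb (row i A) - dotv (row i A) (zb - g x).
      by rewrite dotvBr (dotvC (row i A) zb) (dotvC (row i A) (g x)); ring.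
    have X1 : nr * `|zb - g x| <= nr * q1 by apply: ler_wpM2l => //; exact: ltW.
    have X2 : t * dd <= t * `|dd| by apply: ler_wpM2l => //; exact: ler_norm.
    have X3 : t * `|dd| <= q2 * `|dd| by apply: ler_wpM2r => //; exact: le_trans te e2.
    rewrite dotvDl dotvZl E -/dd.
    have : nr * q1 <= s / 2 by nra.
    have : q2 * `|dd| <= s / 2 by nra.
    rewrite /s in E * => ? ?. lra.
  exists e => // x t hx hxe t0 te i; rewrite mulmxT_dot; exact: he.
have gam0 : 0 < gam := hvh.
set Hh := n1 h. have Hh0 : 0 <= Hh := n1_ge0 h.
set M := n1 vbar + 1.
have M0 : 0 < M by rewrite /M ltr_pwDr // n1_ge0.
have kk : 0 < kap + 1 by lra.
have hM : 0 < 4 * (M + gam) * (kap + 1) by rewrite !mulr_gt0 //; lra.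
set e1 := gam / (4 * (M + gam) * (kap + 1)).
have e10 : 0 < e1 by rewrite divr_gt0.
have e1e : e1 * (4 * (M + gam) * (kap + 1)) = gam by rewrite /e1 divfK // gt_eqF.
have [rb rb0 hrb] := g_est xbar h e10.
have [ru ru0 hru] : exists2 r : R, 0 < r & forall x, `|xbar - x| < r -> U x.
  move/nbhs_normP: hU => [r r0 hr]; exists r => // x hx; exact: (hr x hx).
set mn := Order.min ra (Order.min rb ru).
have mn0 : 0 < mn by rewrite !lt_min ra0 rb0 ru0.
have m1 : mn <= ra by rewrite /mn ge_min lexx.
have m2 : mn <= rb by rewrite /mn !ge_min lexx !orbT.
have m3 : mn <= ru by rewrite /mn !ge_min lexx !orbT.
set rho := mn / 2.
have rho0 : 0 < rho by rewrite divr_gt0.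
have rhoe : rho * 2 = mn by rewrite /rho divfK.
have hn : 0 < n%:R + 1 :> R by rewrite ltr_pwDr.
have hH1 : 0 < 4 * (Hh + 1) by rewrite mulr_gt0 // ltr_pwDr.
set ev := Order.min (gam / (4 * (Hh + 1))) (1 / (n%:R + 1)).
have ev0 : 0 < ev by rewrite lt_min !divr_gt0.
have ev1 : ev <= gam / (4 * (Hh + 1)) by rewrite /ev ge_min lexx.
have ev2 : ev <= 1 / (n%:R + 1) by rewrite /ev ge_min lexx orbT.
have F1 := seq_eps xkc rho0.
have F2 := seq_eps vkc ev0.
have F3 : \forall N \near \oo, `|xbar - xk N| < rho /\ `|vbar - vk N| < ev.
  exact: (@filterS2 _ _ _ _ _ _ (fun N a b => conj a b) F1 F2).
have [N [hN1 hN2]] := filter_ex F3.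
set xN := xk N. set vN := vk N.
have hxN : Th (g xN) := hxk N.
have hHn : 0 < Hh + n%:R + 1 by rewrite -addrA ltr_pwDr.
set eps0 := gam / (4 * (Hh + n%:R + 1)).
have eps00 : 0 < eps0 by rewrite divr_gt0 // mulr_gt0.
have eps0e : eps0 * (4 * (Hh + n%:R + 1)) = gam by rewrite /eps0 divfK // gt_eqF // mulr_gt0.
have [dN [dN0 hdN]] := hreg N eps0 eps00.
have hh1 : 0 < 2 * (`|h| + 1) by rewrite mulr_gt0 // ltr_pwDr.
set r3 := mn / (2 * (`|h| + 1)).
have r3e : r3 * (2 * (`|h| + 1)) = mn by rewrite /r3 divfK // gt_eqF.
set r4 := dN / (Hh + n%:R + 1).
have r4e : r4 * (Hh + n%:R + 1) = dN by rewrite /r4 divfK // gt_eqF.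
set T := Order.min ra (Order.min rb (Order.min r3 r4)).
have T0 : 0 < T by rewrite !lt_min ra0 rb0 !divr_gt0.
have Ta : T <= ra by rewrite /T ge_min lexx.
have Tb : T <= rb by rewrite /T !ge_min lexx !orbT.
have T3 : T <= r3 by rewrite /T !ge_min lexx !orbT.
have T4 : T <= r4 by rewrite /T !ge_min lexx !orbT.
set t := T / 2.
have te : t * 2 = T by rewrite /t divfK.
have t0 : 0 < t by rewrite divr_gt0.
have hxa : `|xbar - xN| < ra by lra.
have hxb : `|xbar - xN| < rb by lra.
have hTh : Th (g xN + t *: d) by apply: hra => //; [exact: ltW|lra].
have hest : enorm (g (xN + t *: h) - g xN - t *: d) <= e1 * t.
  by apply: hrb => //; [exact: ltW|lra].
have sd1 : setdist (g (xN + t *: h)) Th <= e1 * t.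
  by apply: le_trans (setdist_le _ hTh) _; rewrite opprD addrA.
have hUy : U (xN + t *: h).
  apply: hru; rewrite opprD addrA; apply: (le_lt_trans (ler_normB _ _)).
  rewrite normrZ (gtr0_norm t0).
  have nh := normr_ge0 h.
  have : t * `|h| <= r3 * `|h| by apply: ler_wpM2r => //; lra.
  nra.
have sd2 : setdist (xN + t *: h) [set x | Th (g x)] <= kap * (e1 * t).
  by apply: le_trans (hmscq _ hUy) _; apply: ler_wpM2l => //; exact: ltW.
have et0 : 0 < e1 * t by rewrite mulr_gt0.
have [x' hx' hr] : exists2 x', Th (g x') & enorm (xN + t *: h - x') < (kap + 1) * (e1 * t).
  apply: setdist_lt; first by exists xN.
  by apply: le_lt_trans sd2 _; nra.
set r := xN + t *: h - x' in hr.
have xx : x' - xN = t *: h - r by apply/rowP => i; rewrite /r !mxE; ring.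
set c1 := (kap + 1) * e1.
have c1e : c1 * 4 * (M + gam) = gam by rewrite /c1 -[RHS]e1e; ring.
have c10 : 0 < c1 by rewrite mulr_gt0.
have c1le : c1 * 4 <= 1 by nra.
have Mc : M * c1 * 4 <= gam by nra.
have er' : enorm r <= c1 * t by rewrite /c1 -mulrA; exact: ltW.
have enr := enorm_ge0 r.
have hn1r : n1 r <= n%:R * enorm r := n1_le_enorm r.
have hn0 : 0 <= n%:R :> R := ler0n _ _.
have nx : n1 (x' - xN) <= t * Hh + n%:R * (c1 * t).
  rewrite xx; apply: (le_trans (n1D _ _)); rewrite n1N n1Z (gtr0_norm t0).
  apply: lerD => //; apply: le_trans hn1r _; exact: ler_wpM2l.
have ex' : enorm (x' - xN) < dN.
  apply: (le_lt_trans (enorm_le_n1 _)); apply: (le_lt_trans nx).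
  have : n%:R * (c1 * t) <= n%:R * t by apply: ler_wpM2l => //; nra.
  have : t * (Hh + n%:R + 1) < r4 * (Hh + n%:R + 1) by rewrite ltr_pM2r //; lra.
  nra.
have reg := hdN x' hx' ex'.
have ub : dotv vN (x' - xN) <= gam * t / 4.
  apply: (le_trans reg); apply: (le_trans (ler_wpM2l (ltW eps00) (le_trans (enorm_le_n1 _) nx))).
  have : n%:R * (c1 * t) <= n%:R * t by apply: ler_wpM2l => //; nra.
  nra.
have hv1 : `|dotv (vbar - vN) h| <= Hh * `|vbar - vN|.
  by rewrite dotvC; exact: dotv_le_norm.
have hv2 : Hh * `|vbar - vN| <= gam / 4.
  have : Hh * `|vbar - vN| <= Hh * (gam / (4 * (Hh + 1))).
    by apply: ler_wpM2l => //; apply: ltW; exact: (lt_le_trans hN2 ev1).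
  have : gam / (4 * (Hh + 1)) * (4 * (Hh + 1)) = gam by rewrite divfK // gt_eqF.
  set q := gam / (4 * (Hh + 1)). nra.
have hvh' : 3 * gam / 4 <= dotv vN h.
  have : dotv (vbar - vN) h = gam - dotv vN h by rewrite dotvBl.
  have := ler_norm (dotv (vbar - vN) h). lra.
have hnv : n1 vN <= M.
  have E : vN = vbar + (vN - vbar) by rewrite addrC subrK.
  rewrite E; apply: (le_trans (n1D _ _)); rewrite /M lerD2l.
  apply: (le_trans (n1_le_norm _)); rewrite distrC.
  have : `|vbar - vN| <= 1 / (n%:R + 1) by apply: ltW; exact: (lt_le_trans hN2 ev2).
  have : 1 / (n%:R + 1) * (n%:R + 1) = 1 :> R by rewrite divfK // gt_eqF.
  set q := 1 / (n%:R + 1). have := normr_ge0 (vbar - vN). nra.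
have hvr : dotv vN r <= M * (c1 * t).
  apply: (le_trans (ler_norm _)); apply: (le_trans (dotv_le_enorm _ _)).
  by apply: ler_pM => //; exact: n1_ge0.
have lb : gam * t / 2 <= dotv vN (x' - xN).
  rewrite xx dotvBr dotvZr.
  have : t * (3 * gam / 4) <= t * dotv vN h by apply: ler_wpM2l => //; exact: ltW.
  nra.
nra.
Qed.

End G2.

Unset Implicit Arguments.

Theorem lemma8p2 (R : realType) (n m : nat)
  (Theta : set 'rV[R]_m) (g : 'rV[R]_n -> 'rV[R]_m) (xbar vbar : 'rV[R]_n) :
  Theta !=set0 ->
  polyhedral Theta ->
  C2 g ->
  Theta (g xbar) ->
  MSCQ g Theta xbar ->
  limiting_normal [set x | Theta (g x)] xbar vbar ->
  forall v, critical_cone [set x | Theta (g x)] xbar vbar v ->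
    argmax_set g Theta xbar vbar v !=set0.
Proof.
move=> _ [k [A [b ->]]] [hg [hgj hgc]] hzb hmscq hlim v hcrit.
have hzb' : thetaS A b (g xbar) := hzb.
have hmscq' : MSCQ g (thetaS A b) xbar := hmscq.
have hlim' : limiting_normal [set x | thetaS A b (g x)] xbar vbar := hlim.
set zb := g xbar.
pose B := fun i => jac_adj g xbar (cgen A b zb i).
pose W := \sum_(j < n) \sum_(l < n) (v 0 j * v 0 l) *: H2 g j l xbar.
have hq : forall y, hess_quad g xbar y v = dotv y W.
  move=> y; rewrite (hessE hg hgj) dotv_sumr; apply: eq_bigr => j _.
  by rewrite dotv_sumr; apply: eq_bigr => l _; rewrite dotvZr.
pose w := fun i => dotv (cgen A b zb i) W.
have objE : forall mu, obj w mu = dotv (\sum_(i < k) mu i *: cgen A b zb i) W.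
  by move=> mu; rewrite /obj dotv_suml; apply: eq_bigr => i _; rewrite dotvZl.
have noray : forall d : 'I_k -> R, (forall i, 0 <= d i) ->
    \sum_(i < k) d i *: B i = 0 -> obj w d <= 0.
  move=> d d0 dB; rewrite objE -hq (hessE hg hgj).
  have [_ hN] := cone_normal hzb' (ex_intro _ d (conj d0 erefl) : incone (cgen A b zb) _).
  apply: (recession hg hgj hgc) _ _ hcrit.1 => [z' hz'|j]; first exact: hN.
  have := congr1 (fun u : 'rV[R]_n => u 0 j) (jac_lin g d (cgen A b zb) xbar).
  by rewrite dB !mxE /=.
have [mu0 [mu00 hmu0]] := ne_mult hg hgj hzb' hmscq' hlim'.
have feas0 : feas B vbar mu0 by split => //; rewrite hmu0.
have [mus [fs hmax]] := lp_max noray (ex_intro _ mu0 feas0).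
exists (\sum_(i < k) mus i *: cgen A b zb i); split.
  split; first by rewrite jac_lin fs.2.
  exact: (cone_normal hzb' (ex_intro _ mus (conj fs.1 erefl))).
move=> y' [hv' hn']; have [mu' [mu'0 hy']] := normal_cone hzb' hn'.
rewrite !hq hy' -!objE; apply: hmax; split => //.
by rewrite hv' hy' jac_lin.
Qed.
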